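(* Let $1\le p\le 2$ and let $p'$ be the conjugate exponent, $1/p+1/p'=1$. Fix $N\ge 1$. Suppose that for every complex block matrix $S=\begin{pmatrix} S_1 & \cdots & S_N\\ R_1&\cdots&R_N\end{pmatrix}$ partitioned into $2\times N$ blocks one has $\|S\|_p\ge \|\mathcal C_p(S)\|_p$. Then for every complex block matrix $T=\begin{pmatrix} A_1 & \cdots & A_N\\ B_1&\cdots&B_N\end{pmatrix}$ partitioned into $2\times N$ blocks one has $\|T\|_{p'}\le \|\mathcal C_{p'}(T)\|_{p'}$.
   Context: For a matrix $X$ and $r\ge1$, $\|X\|_r=(\operatorname{Tr}|X|^r)^{1/r}$ is the Schatten $r$-norm, $|X|=(X^*X)^{1/2}$. A $2\times N$ partitioned block matrix has blocks $A_k$ (first block row) and $B_k$ (second block row), where all blocks in a block row have the same number of rows and all blocks in a block column have the same number of columns. Its Schatten $r$-norm compression is the $2\times N$ real matrix $\mathcal C_r(T)=\begin{pmatrix} \|A_1\|_r & \cdots & \|A_N\|_r\\ \|B_1\|_r&\cdots&\|B_N\|_r\end{pmatrix}$. *)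

(* Defs.v *)
From HB Require Import structures.
From mathcomp Require Import all_boot all_order all_algebra.
From mathcomp Require Import spectral sesquilinear.
From mathcomp Require Import complex.
From mathcomp Require Import reals exp.
Set Implicit Arguments. Unset Strict Implicit. Unset Printing Implicit Defensive.
Import Order.TTheory GRing.Theory Num.Theory Num.Def.
Local Open Scope ring_scope.
Local Open Scope complex_scope.
Local Open Scope sesquilinear_scope.

Definition cre {R : realType} (z : R[i]) : R := complex.Re z.

(* Continuous functional calculus for a (Hermitian) matrix A via the spectral
   theorem: A = U^-1 diag(d) U with U unitary (spectralmx A), and
   f(A) := U^* diag(f(Re d_i)) U. *)
Definition mxfun {R : realType} (f : R -> R) n (A : 'M[R[i]]_n) : 'M[R[i]]_n :=
  let U := spectralmx A in
  (U ^t conjC) *m diag_mx (\row_i ((f (cre (spectral_diag A 0 i)))%:C)) *m U.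

Definition absmx {R : realType} m n (X : 'M[R[i]]_(m, n)) : 'M[R[i]]_n :=
  mxfun (@Num.sqrt R) ((X ^t conjC) *m X).

Definition schatten {R : realType} (r : R) m n (X : 'M[R[i]]_(m, n)) : R :=
  powR (cre (\tr (mxfun (fun t => powR t r) (absmx X)))) r^-1.

Definition blockT {R : realType} (N m1 m2 : nat) (n : 'I_N -> nat)
  (A : forall k : 'I_N, 'M[R[i]]_(m1, n k)) (B : forall k : 'I_N, 'M[R[i]]_(m2, n k))
  : 'M[R[i]]_(m1 + m2, \sum_(k < N) n k) :=
  col_mx (\mxrow_(k < N) A k) (\mxrow_(k < N) B k).

(* Operator norm = Schatten infinity-norm = largest singular value of X
   (= largest eigenvalue of |X|); used for the conjugate exponent p' = oo when p = 1. *)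
Definition schatten_inf {R : realType} m n (X : 'M[R[i]]_(m, n)) : R :=
  \big[Num.max/0]_(j < n) Num.sqrt (cre (spectral_diag ((X ^t conjC) *m X) 0 j)).

Definition compress_with {R : realType} (nrm : forall m n, 'M[R[i]]_(m, n) -> R)
  (N m1 m2 : nat) (n : 'I_N -> nat)
  (A : forall k : 'I_N, 'M[R[i]]_(m1, n k)) (B : forall k : 'I_N, 'M[R[i]]_(m2, n k))
  : 'M[R[i]]_(2, N) :=
  \matrix_(i < 2, k < N) (if i == 0 :> nat then nrm _ _ (A k) else nrm _ _ (B k))%:C.

Definition compress {R : realType} (r : R) :=
  @compress_with R (fun m n (X : 'M[R[i]]_(m, n)) => schatten r X).

Definition compress_inf {R : realType} :=
  @compress_with R (fun m n (X : 'M[R[i]]_(m, n)) => schatten_inf X).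

(* Main.v *)
Require Import Defs.
From HB Require Import structures.
From mathcomp Require Import all_boot all_order all_algebra.
From mathcomp Require Import spectral sesquilinear complex reals exp.
From mathcomp Require Import ring lra.
Set Implicit Arguments. Unset Strict Implicit. Unset Printing Implicit Defensive.
Import Order.TTheory GRing.Theory Num.Theory Num.Def.
Local Open Scope ring_scope.
Local Open Scope complex_scope.
Local Open Scope sesquilinear_scope.

Section Gen.
Variable C : numClosedFieldType.

Lemma adjM m n p (A : 'M[C]_(m,n)) (B : 'M[C]_(n,p)) :
  (A *m B) ^t conjC = B ^t conjC *m A ^t conjC.
Proof. by rewrite trmx_mul map_mxM. Qed.

Lemma adjK m n (A : 'M[C]_(m,n)) : A ^t conjC ^t conjC = A.
Proof. exact: trmxCK. Qed.

Lemma unitaryVE n (U : 'M[C]_n) : U \is unitarymx -> U ^t conjC *m U = 1%:M.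
Proof. by move=> uU; rewrite -invmx_unitary // mulVmx // unitarymx_unit. Qed.

Lemma unitaryE n (U : 'M[C]_n) : U \is unitarymx -> U *m U ^t conjC = 1%:M.
Proof. by rewrite qualifE => /eqP. Qed.

Lemma adj_diag n (d : 'rV[C]_n) : (diag_mx d) ^t conjC = diag_mx (map_mx conjC d).
Proof. by rewrite tr_diag_mx map_diag_mx. Qed.

Lemma diag_mxM n (d e : 'rV[C]_n) : diag_mx d *m diag_mx e = diag_mx (\row_i (d 0 i * e 0 i)).
Proof.
apply/matrixP => i j; rewrite mul_diag_mx !mxE.
by rewrite mulrnAr.
Qed.

Lemma spectral_decomp n (A : 'M[C]_n) : A \is normalmx ->
  A = (spectralmx A) ^t conjC *m diag_mx (spectral_diag A) *m spectralmx A.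
Proof.
move=> /orthomx_spectralP {1}->.
by rewrite invmx_unitary // spectral_unitarymx.
Qed.

Lemma unitary_normal n (W : 'M[C]_n) (d : 'rV[C]_n) : W \is unitarymx ->
  W ^t conjC *m diag_mx d *m W \is normalmx.
Proof.
move=> uW; apply/normalmxP.
set D := diag_mx d; set V := W ^t conjC.
have -> : (V *m D *m W) ^t conjC = V *m D ^t conjC *m W.
  by rewrite !adjM adjK mulmxA.
have E : forall X Y : 'M[C]_n, V *m X *m W *m (V *m Y *m W) = V *m (X *m Y) *m W.
  move=> X Y; rewrite !mulmxA; congr (_ *m _).
  rewrite -[V *m X *m W *m V]mulmxA unitaryE // mulmx1 -mulmxA //.
rewrite !E; congr (_ *m _ *m _).
rewrite /D adj_diag !diag_mxM; congr diag_mx; apply/rowP => i; rewrite !mxE.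
exact: mulrC.
Qed.

Lemma L1g (g : C -> C) n (W : 'M[C]_n) (d : 'rV[C]_n) : W \is unitarymx ->
  let A := W ^t conjC *m diag_mx d *m W in
  (spectralmx A) ^t conjC *m diag_mx (map_mx g (spectral_diag A)) *m spectralmx A
  = W ^t conjC *m diag_mx (map_mx g d) *m W.
Proof.
move=> uW A.
have nA : A \is normalmx by apply: unitary_normal.
have eA := spectral_decomp nA.
move: eA.
have uU : spectralmx A \is unitarymx by apply: spectral_unitarymx.
move: uU.
generalize (spectralmx A) (spectral_diag A) => U e uU eA.
pose M := U *m W ^t conjC.
have hU : U = M *m W by rewrite /M -mulmxA unitaryVE // mulmx1.
have uM : M \is unitarymx by rewrite /M mul_unitarymx // trmxC_unitary.
have eM : diag_mx e *m M = M *m diag_mx d.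
  have De : diag_mx e = U *m A *m U ^t conjC.
    by rewrite eA !mulmxA unitaryE // mul1mx mulmxtVK.
  by rewrite De /A /M !mulmxA mulmxKtV // mulmxtVK.
clearbody M.
have eMf : diag_mx (map_mx g e) *m M = M *m diag_mx (map_mx g d).
  apply/matrixP => i j; have /matrixP /(_ i j) := eM.
  rewrite mul_diag_mx mul_mx_diag [LHS]mxE [RHS]mxE => h.
  rewrite mul_diag_mx mul_mx_diag [LHS]mxE [RHS]mxE !mxE.
  have [M0|Mn0] := eqVneq (M i j) 0; first by rewrite M0 mulr0 mul0r.
  have : e 0 i = d 0 j by apply: (mulIf Mn0); rewrite h mulrC.
  by move=> ->; rewrite mulrC.
have eMf' : forall X : 'M[C]_n, X *m diag_mx (map_mx g e) *m M = X *m M *m diag_mx (map_mx g d).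
  by move=> X; rewrite -mulmxA eMf mulmxA.
by rewrite hU adjM !mulmxA eMf' mulmxKtV.
Qed.

Local Notation adj X := (X ^t conjC).

Lemma adjE m n (A : 'M[C]_(m,n)) i j : adj A i j = conjC (A j i).
Proof. by rewrite !mxE. Qed.

Lemma adjmul_diag m n (Z : 'M[C]_(m,n)) j : (adj Z *m Z) j j = \sum_k `|Z k j| ^+ 2.
Proof. by rewrite !mxE; apply: eq_bigr => k _; rewrite !mxE normCK mulrC. Qed.

Lemma adjmul_ge0 m n (Z : 'M[C]_(m,n)) j : 0 <= (adj Z *m Z) j j.
Proof. by rewrite adjmul_diag; apply: sumr_ge0 => k _; rewrite exprn_ge0. Qed.

Lemma adjmul_col0 m n (Z : 'M[C]_(m,n)) j : (adj Z *m Z) j j = 0 -> forall k, Z k j = 0.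
Proof.
rewrite adjmul_diag => /psumr_eq0P H k.
have /eqP := H (fun i _ => exprn_ge0 2 (normr_ge0 (Z i j))) k isT.
by rewrite sqrf_eq0 normr_eq0 => /eqP.
Qed.

Lemma adjB m n (A B : 'M[C]_(m,n)) : adj (A - B) = adj A - adj B.
Proof. by rewrite linearB /= map_mxB. Qed.

Lemma PI_le m n p (K : 'M[C]_(m,n)) (Z : 'M[C]_(m,p)) j :
  K *m adj K *m K = K ->
  (adj Z *m (K *m adj K) *m Z) j j <= (adj Z *m Z) j j.
Proof.
move=> hK.
set Pi := K *m adj K.
have aPi : adj Pi = Pi by rewrite /Pi adjM adjK.
have PP : Pi *m Pi = Pi by rewrite /Pi mulmxA hK.
clearbody Pi.
set W := Z - Pi *m Z.
have E : adj W *m W = adj Z *m Z - adj Z *m Pi *m Z.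
  rewrite /W adjB adjM aPi mulmxBl !mulmxBr.
  rewrite !mulmxA -(mulmxA (adj Z) Pi Pi) PP.
  by rewrite subrr subr0.
have := adjmul_ge0 W j; rewrite E !mxE.
by rewrite subr_ge0.
Qed.


Lemma gen_side m n (X : 'M[C]_(m,n)) (V : 'M[C]_n) (e s : 'rV[C]_n) :
  V \is unitarymx -> adj X *m X = adj V *m diag_mx e *m V ->
  (forall i, conjC (s 0 i) = s 0 i /\ s 0 i * s 0 i = e 0 i) ->
  exists K : 'M[C]_(m,n),
    [/\ X = K *m diag_mx s *m V, K *m adj K *m K = K & forall i, (adj K *m K) i i <= 1].
Proof.
move=> uV hXX hs.
pose P := X *m adj V.
have hX : X = P *m V by rewrite /P mulmxKtV.
have hP : adj P *m P = diag_mx e.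
  rewrite /P adjM adjK mulmxA -(mulmxA V) hXX !mulmxA unitaryE // mul1mx.
  by rewrite mulmxtVK.
clearbody P.
have col0 : forall i, s 0 i = 0 -> forall k, P k i = 0.
  move=> i si0; apply: adjmul_col0; rewrite hP mxE eqxx mulr1n.
  by rewrite -(hs i).2 si0 mulr0.
pose si := map_mx GRing.inv s.
pose K := P *m diag_mx si.
have KD : K *m diag_mx s = P.
  apply/matrixP => k i; rewrite mul_mx_diag /K mul_mx_diag !mxE.
  have [s0|sn0] := eqVneq (s 0 i) 0; first by rewrite (col0 i s0) !mul0r.
  by rewrite -mulrA mulVf // mulr1.
pose ind := \row_i ((s 0 i != 0)%:R : C).
have KK : adj K *m K = diag_mx ind.
  rewrite /K adjM mulmxA -(mulmxA _ (adj P)) hP adj_diag !diag_mxM.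
  congr diag_mx; apply/rowP => i; rewrite !mxE.
  have [h1 h2] := hs i.
  have -> : conjC (s 0 i)^-1 = (s 0 i)^-1 by rewrite fmorphV; congr GRing.inv; exact: h1.
  rewrite -h2.
  have [s0|sn0] := eqVneq (s 0 i) 0; first by rewrite s0 invr0 !mul0r.
  by rewrite /= mulrA mulVf // mul1r mulfV.
exists K; split.
- by rewrite KD.
- rewrite -mulmxA KK; apply/matrixP => k i; rewrite mul_mx_diag /K mul_mx_diag !mxE.
  have [s0|sn0] := eqVneq (s 0 i) 0; first by rewrite s0 invr0 !mulr0.
  by rewrite mulr1.
- move=> i; rewrite KK mxE eqxx mulr1n mxE.
  by case: (s 0 i != 0); rewrite ?ler01 ?lexx.
Qed.


Lemma mul_adj_ii m n (A : 'M[C]_(m,n)) i : (A *m adj A) i i = \sum_j A i j * conjC (A i j).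
Proof. by rewrite mxE; apply: eq_bigr => j _; rewrite !mxE. Qed.

Lemma adj_mul_ii m n (A : 'M[C]_(m,n)) j : (adj A *m A) j j = \sum_i A i j * conjC (A i j).
Proof. by rewrite mxE; apply: eq_bigr => i _; rewrite !mxE mulrC. Qed.

Lemma adj_diag_real n (t : 'rV[C]_n) : (forall i, conjC (t 0 i) = t 0 i) ->
  adj (diag_mx t) = diag_mx t.
Proof.
move=> ht; rewrite adj_diag; congr diag_mx; apply/rowP => i; rewrite !mxE; exact: ht.
Qed.

Lemma tr_expand n (t s : 'rV[C]_n) (H M : 'M[C]_n) :
  \tr (diag_mx t *m H *m diag_mx s *m M) = \sum_j \sum_i t 0 j * s 0 i * (H j i * M i j).
Proof.
rewrite /mxtrace; apply: eq_bigr => j _; rewrite mxE; apply: eq_bigr => i _.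
rewrite mul_mx_diag mul_diag_mx !mxE; ring.
Qed.

Lemma gen_holder m n (X Y : 'M[C]_(m,n)) (V Q : 'M[C]_n) (e f s t : 'rV[C]_n) :
  V \is unitarymx -> Q \is unitarymx ->
  adj X *m X = adj V *m diag_mx e *m V ->
  adj Y *m Y = adj Q *m diag_mx f *m Q ->
  (forall i, conjC (s 0 i) = s 0 i /\ s 0 i * s 0 i = e 0 i) ->
  (forall i, conjC (t 0 i) = t 0 i /\ t 0 i * t 0 i = f 0 i) ->
  exists H M : 'M[C]_n,
   [/\ \tr (adj Y *m X) = \sum_j \sum_i t 0 j * s 0 i * (H j i * M i j),
       forall j, \sum_i H j i * conjC (H j i) <= 1,
       forall i, \sum_j H j i * conjC (H j i) <= 1,
       forall i, \sum_j M i j * conjC (M i j) = 1 &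
       forall j, \sum_i M i j * conjC (M i j) = 1].
Proof.
move=> uV uQ hX hY hs ht.
have [K [eX hK kK]] := gen_side uV hX hs.
have [L [eY hL kL]] := gen_side uQ hY ht.
have tr : forall i, conjC (t 0 i) = t 0 i by move=> i; case: (ht i).
have eT : \tr (adj Y *m X) = \tr (diag_mx t *m (adj L *m K) *m diag_mx s *m (V *m adj Q)).
  rewrite eX eY !adjM adj_diag_real // -!mulmxA [LHS]mxtrace_mulC.
  by rewrite !mulmxA.
exists (adj L *m K), (V *m adj Q); split.
- by rewrite eT tr_expand.
- move=> j; rewrite -mul_adj_ii adjM adjK mulmxA -(mulmxA (adj L)).
  exact: le_trans (@PI_le m n n K L j hK) (kL j).
- move=> i; rewrite -adj_mul_ii adjM adjK mulmxA -(mulmxA (adj K)).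
  exact: le_trans (@PI_le m n n L K i hL) (kK i).
- move=> i; rewrite -mul_adj_ii adjM adjK mulmxA mulmxKtV // unitaryE // mxE eqxx //.
- move=> j; rewrite -adj_mul_ii adjM adjK mulmxA mulmxKtV // unitaryE // mxE eqxx //.
Qed.


Lemma adjadj_normal m n (X : 'M[C]_(m,n)) : adj X *m X \is normalmx.
Proof. by apply/normalmxP; rewrite adjM adjK. Qed.

Lemma canon_decomp m n (X : 'M[C]_(m,n)) :
  adj X *m X = adj (spectralmx (adj X *m X)) *m diag_mx (spectral_diag (adj X *m X))
               *m spectralmx (adj X *m X).
Proof. exact: spectral_decomp (adjadj_normal X). Qed.

Lemma decomp_ge0 m n (X : 'M[C]_(m,n)) (W : 'M[C]_n) (d : 'rV[C]_n) :
  W \is unitarymx -> adj X *m X = adj W *m diag_mx d *m W -> forall i, 0 <= d 0 i.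
Proof.
move=> uW hX i.
pose P := X *m adj W.
have hP : adj P *m P = diag_mx d.
  rewrite /P adjM adjK mulmxA -(mulmxA W) hX !mulmxA unitaryE // mul1mx.
  by rewrite mulmxtVK.
by have := adjmul_ge0 P i; rewrite hP mxE eqxx mulr1n.
Qed.

Lemma tr_unitary_conj n (W D : 'M[C]_n) : W \is unitarymx -> \tr (adj W *m D *m W) = \tr D.
Proof. by move=> uW; rewrite mxtrace_mulC mulmxA unitaryE // mul1mx. Qed.

Lemma attain m n (X : 'M[C]_(m,n)) (V : 'M[C]_n) (e g : 'rV[C]_n) :
  V \is unitarymx -> adj X *m X = adj V *m diag_mx e *m V ->
  (forall i, conjC (g 0 i) = g 0 i) ->
  adj (X *m (adj V *m diag_mx g *m V)) *m (X *m (adj V *m diag_mx g *m V))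
    = adj V *m diag_mx (\row_i (g 0 i * e 0 i * g 0 i)) *m V /\
  \tr (adj (X *m (adj V *m diag_mx g *m V)) *m X) = \sum_i g 0 i * e 0 i.
Proof.
move=> uV hX hg.
have aS : adj (X *m (adj V *m diag_mx g *m V)) = adj V *m diag_mx g *m V *m adj X.
  by rewrite !adjM adjK adj_diag_real // !mulmxA.
have e1 : forall k (Z : 'M[C]_(k,n)), Z *m adj X *m X = Z *m (adj V *m diag_mx e *m V).
  by move=> k Z; rewrite -mulmxA hX.
rewrite aS; split.
- rewrite !mulmxA e1 !mulmxA !mulmxtVK //.
  have -> : adj V *m diag_mx g *m diag_mx e *m diag_mx g *m V
          = adj V *m (diag_mx g *m diag_mx e *m diag_mx g) *m V by rewrite !mulmxA.
  by rewrite !diag_mxM; congr (_ *m diag_mx _ *m _); apply/rowP => i; rewrite !mxE.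
- rewrite e1 !mulmxA mulmxtVK //.
  have -> : adj V *m diag_mx g *m diag_mx e *m V = adj V *m (diag_mx g *m diag_mx e) *m V
    by rewrite !mulmxA.
  by rewrite tr_unitary_conj // diag_mxM mxtrace_diag; apply: eq_bigr => i _; rewrite mxE.
Qed.

Lemma adj_mxrow (N m : nat) (q : 'I_N -> nat) (S : forall k, 'M[C]_(m, q k)) :
  adj (mxrow S) = mxcol (fun k => adj (S k)).
Proof. by apply/matrixP => i j; rewrite !mxE. Qed.

Lemma tr_colrow (N m1 m2 : nat) (q : 'I_N -> nat)
  (A S : forall k, 'M[C]_(m1, q k)) (B Rb : forall k, 'M[C]_(m2, q k)) :
  \tr (adj (col_mx (mxrow S) (mxrow Rb)) *m col_mx (mxrow A) (mxrow B)) =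
  \sum_k (\tr (adj (S k) *m A k) + \tr (adj (Rb k) *m B k)).
Proof.
rewrite tr_col_mx map_row_mx mul_row_col mxtraceD.
rewrite !adj_mxrow !mul_mxcol_mxrow !mxtrace_mxblock.
by rewrite big_split.
Qed.

End Gen.





From HB Require Import structures.
From mathcomp Require Import all_boot all_order all_algebra.
From mathcomp Require Import reals exp.
From mathcomp Require Import ring lra.
Set Implicit Arguments. Unset Strict Implicit. Unset Printing Implicit Defensive.
Import Order.TTheory GRing.Theory Num.Theory Num.Def.
Local Open Scope ring_scope.

Section Scalar.
Variable R : realType.

Lemma powR_powRinv (S r : R) : 0 <= S -> r != 0 -> powR (powR S r^-1) r = S.
Proof. by move=> S0 r0; rewrite -powRrM mulVf // powRr1. Qed.

Lemma powR_invbase (A r : R) : 0 < A -> powR (A^-1) r = (powR A r)^-1.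
Proof.
move=> A0.
have h : powR (A^-1) r * powR A r = 1.
  by rewrite -powRM ?invr_ge0 ?ltW // mulVf ?gt_eqF // powR1.
have ny : powR A r != 0 by rewrite gt_eqF // powR_gt0.
by apply: (mulIf ny); rewrite h mulVf.
Qed.

Lemma sum_normalize n (a : 'I_n -> R) (q A : R) : 0 < q -> (forall i, 0 <= a i) ->
  A = powR (\sum_i powR (a i) q) q^-1 -> 0 < A ->
  \sum_i powR (a i / A) q = 1.
Proof.
move=> q0 a0 hA A0.
have SA : powR A q = \sum_i powR (a i) q.
  by rewrite hA powR_powRinv ?gt_eqF // sumr_ge0 // => i _; rewrite powR_ge0.
under eq_bigr => i _ do rewrite powRM ?a0 ?invr_ge0 ?ltW // powR_invbase //.
rewrite -mulr_suml SA mulfV //.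
by rewrite -SA gt_eqF // powR_gt0.
Qed.

Lemma sum_zero n (a : 'I_n -> R) (q : R) : 0 < q -> (forall i, 0 <= a i) ->
  powR (\sum_i powR (a i) q) q^-1 = 0 -> forall i, a i = 0.
Proof.
move=> q0 a0 /powR_eq0_eq0 /eqP; rewrite psumr_eq0; last by move=> i _; exact: powR_ge0.
move=> /allP h i; have := h i (mem_index_enum i); rewrite implyTb => /eqP.
by move/powR_eq0_eq0.
Qed.

Lemma SH n (a b : 'I_n -> R) (w : 'I_n -> 'I_n -> R) (p q : R) :
  1 < p -> p^-1 + q^-1 = 1 ->
  (forall i, 0 <= a i) -> (forall j, 0 <= b j) -> (forall j i, 0 <= w j i) ->
  (forall j, \sum_i w j i <= 1) -> (forall i, \sum_j w j i <= 1) ->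
  \sum_j \sum_i b j * a i * w j i <=
    powR (\sum_i powR (a i) q) q^-1 * powR (\sum_j powR (b j) p) p^-1.
Proof.
move=> p1 pq a0 b0 w0 wr wc.
have p0 : 0 < p by lra.
have pi1 : p^-1 < 1 by rewrite invf_lt1.
have q0 : 0 < q by rewrite -invr_gt0; lra.
have [A hA] : exists A, A = powR (\sum_i powR (a i) q) q^-1 by eexists.
have [B hB] : exists B, B = powR (\sum_j powR (b j) p) p^-1 by eexists.
rewrite -hA -hB.
have [A0|Apos] := eqVneq A 0.
  have az := sum_zero q0 a0 (etrans (esym hA) A0).
  rewrite A0 mul0r; apply: le_trans (lexx _) _.
  rewrite big1 // => j _; rewrite big1 // => i _; by rewrite az mulr0 mul0r.
have [B0|Bpos] := eqVneq B 0.
  have bz := sum_zero p0 b0 (etrans (esym hB) B0).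
  rewrite B0 mulr0; rewrite big1 // => j _; rewrite big1 // => i _; by rewrite bz !mul0r.
have Ag : 0 < A by rewrite lt_def Apos hA powR_ge0.
have Bg : 0 < B by rewrite lt_def Bpos hB powR_ge0.
have SA : \sum_i powR (a i / A) q = 1 by apply: (sum_normalize q0 a0 hA Ag).
have SB : \sum_j powR (b j / B) p = 1 by apply: (sum_normalize p0 b0 hB Bg).
clear hA hB.
pose x i := powR (a i / A) q / q.
pose y j := powR (b j / B) p / p.
have key : forall j i, b j * a i * w j i <= A * B * (w j i * x i + w j i * y j).
  move=> j i.
  have h := @conjugate_powR R (a i / A) (b j / B) q p (divr_ge0 (a0 i) (ltW Ag))
    (divr_ge0 (b0 j) (ltW Bg)) q0 p0 (etrans (addrC _ _) pq).
  have -> : b j * a i * w j i = A * B * w j i * ((a i / A) * (b j / B)).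
    by rewrite -[in LHS](divfK Apos (a i)) -[in LHS](divfK Bpos (b j)); ring.
  have -> : A * B * (w j i * x i + w j i * y j) = A * B * w j i * (x i + y j) by ring.
  apply: ler_wpM2l => //; apply: mulr_ge0 => //; apply: mulr_ge0; exact: ltW.
apply: le_trans (ler_sum _ (fun j _ => ler_sum _ (fun i _ => key j i))) _.
have E : \sum_j \sum_i A * B * (w j i * x i + w j i * y j) =
   A * B * (\sum_j \sum_i (w j i * x i) + \sum_j \sum_i (w j i * y j)).
  rewrite -big_split mulr_sumr; apply: eq_bigr => j _; rewrite -big_split mulr_sumr //.
have E1 : \sum_j \sum_i (w j i * x i) = \sum_i x i * \sum_j w j i.
  rewrite exchange_big; apply: eq_bigr => i _; rewrite mulr_sumr.
  by apply: eq_bigr => j _; rewrite mulrC.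
have E2 : \sum_j \sum_i (w j i * y j) = \sum_j y j * \sum_i w j i.
  by apply: eq_bigr => j _; rewrite mulr_sumr; apply: eq_bigr => i _; rewrite mulrC.
have x0 : forall i, 0 <= x i by move=> i; rewrite divr_ge0 ?powR_ge0 ?ltW.
have y0 : forall j, 0 <= y j by move=> j; rewrite divr_ge0 ?powR_ge0 ?ltW.
have S1 : \sum_i x i * \sum_j w j i <= q^-1.
  apply: le_trans (_ : \sum_i x i <= _).
    by apply: ler_sum => i _; rewrite -[leRHS]mulr1; apply: ler_wpM2l.
  by rewrite /x -mulr_suml SA mul1r.
have S2 : \sum_j y j * \sum_i w j i <= p^-1.
  apply: le_trans (_ : \sum_j y j <= _).
    by apply: ler_sum => j _; rewrite -[leRHS]mulr1; apply: ler_wpM2l.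
  by rewrite /y -mulr_suml SB mul1r.
clearbody x y.
rewrite E E1 E2.
have ABpos : 0 <= A * B by rewrite mulr_ge0 // ltW.
apply: le_trans (ler_wpM2l ABpos (lerD S1 S2)) _.
by rewrite addrC pq mulr1.
Qed.

End Scalar.

From HB Require Import structures.
From mathcomp Require Import all_boot all_order all_algebra.
From mathcomp Require Import spectral sesquilinear complex reals exp.
From mathcomp Require Import ring lra.
Set Implicit Arguments. Unset Strict Implicit. Unset Printing Implicit Defensive.
Import Order.TTheory GRing.Theory Num.Theory Num.Def.
Local Open Scope ring_scope.
Local Open Scope complex_scope.
Local Open Scope sesquilinear_scope.

Section Real.
Variable R : realType.
Local Notation C := (R[i]).
Local Notation adj X := (X ^t conjC).

Lemma creD (x y : C) : cre (x + y) = cre x + cre y.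
Proof. by case: x; case: y. Qed.

Lemma cre_sum (I : Type) (r : seq I) (P : pred I) (F : I -> C) :
  cre (\sum_(i <- r | P i) F i) = \sum_(i <- r | P i) cre (F i).
Proof. exact: (big_morph _ creD). Qed.

Lemma real_sum (I : Type) (r : seq I) (P : pred I) (F : I -> R) :
  (\sum_(i <- r | P i) F i)%:C = \sum_(i <- r | P i) (F i)%:C :> C.
Proof. by rewrite rmorph_sum. Qed.

Lemma conjC_real (x : R) : conjC (x%:C) = x%:C :> C.
Proof. by apply/eqP; rewrite -CrealE complex_real. Qed.

Lemma mulC_real (x y : R) : x%:C * y%:C = (x * y)%:C :> C.
Proof. by rewrite rmorphM. Qed.

Lemma cre_real (x : R) : cre (x%:C : C) = x.
Proof. by []. Qed.

Lemma ge0_real (z : C) : 0 <= z -> z = (cre z)%:C /\ 0 <= cre z.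
Proof.
case: z => a b; rewrite lecE => /andP [/eqP b0 a0].
split; last exact: a0.
rewrite /cre /=; congr (_ +i* _); exact: b0.
Qed.

Definition nrm2 (z : C) : R := complex.Re z ^+ 2 + complex.Im z ^+ 2.

Lemma mul_conj (z : C) : z * conjC z = (nrm2 z)%:C.
Proof. by rewrite -normCK -add_Re2_Im2. Qed.

Lemma nrm2_ge0 (z : C) : 0 <= nrm2 z.
Proof. by rewrite /nrm2 addr_ge0 // sqr_ge0. Qed.

Lemma re_mul_le (h m : C) : cre (h * m) <= (nrm2 h + nrm2 m) / 2.
Proof.
case: h => a b; case: m => c d; rewrite /nrm2 /cre /=.
have := sqr_ge0 (a - c); have := sqr_ge0 (b + d); nra.
Qed.

Lemma cre_scal (x y : R) (z : C) : cre (x%:C * y%:C * z) = x * y * cre z.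
Proof. by case: z => a b; rewrite /cre /=; ring. Qed.


Definition gf (f : R -> R) (z : C) : C := (f (cre z))%:C.

Lemma mxfunE (f : R -> R) n (A : 'M[C]_n) :
  mxfun f A = adj (spectralmx A) *m diag_mx (map_mx (gf f) (spectral_diag A)) *m spectralmx A.
Proof.
rewrite /mxfun; congr (_ *m diag_mx _ *m _); apply/rowP => i; rewrite !mxE //.
Qed.

Lemma L1R (f : R -> R) n (W : 'M[C]_n) (d : 'rV[C]_n) : W \is unitarymx ->
  mxfun f (adj W *m diag_mx d *m W) = adj W *m diag_mx (map_mx (gf f) d) *m W.
Proof. by move=> uW; rewrite mxfunE; exact: (L1g (gf f) d uW). Qed.

Lemma schatten_W (r : R) m n (X : 'M[C]_(m,n)) (W : 'M[C]_n) (d : 'rV[C]_n) :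
  W \is unitarymx -> adj X *m X = adj W *m diag_mx d *m W ->
  schatten r X = powR (\sum_i powR (Num.sqrt (cre (d 0 i))) r) r^-1.
Proof.
move=> uW hX; rewrite /schatten /absmx hX !L1R // tr_unitary_conj // mxtrace_diag cre_sum.
by congr powR; apply: eq_bigr => i _; rewrite !mxE.
Qed.

Lemma schatten_canon (r : R) m n (X : 'M[C]_(m,n)) :
  schatten r X = powR (\sum_i powR (Num.sqrt (cre (spectral_diag (adj X *m X) 0 i))) r) r^-1.
Proof. exact: (schatten_W r (spectral_unitarymx _) (canon_decomp X)). Qed.


Lemma sum_nrm2_le (I : finType) (F : I -> C) :
  \sum_i F i * conjC (F i) <= 1 -> \sum_i nrm2 (F i) <= 1.
Proof.
under eq_bigr => i _ do rewrite mul_conj.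
by rewrite -real_sum -(rmorph1 (real_complex R)) lecR.
Qed.

Lemma sum_nrm2_eq (I : finType) (F : I -> C) :
  \sum_i F i * conjC (F i) = 1 -> \sum_i nrm2 (F i) = 1.
Proof.
under eq_bigr => i _ do rewrite mul_conj.
by rewrite -real_sum -(rmorph1 (real_complex R)) => -[].
Qed.

Lemma sqrt_cplx (z : C) : 0 <= z ->
  conjC ((Num.sqrt (cre z))%:C) = (Num.sqrt (cre z))%:C /\
  (Num.sqrt (cre z))%:C * (Num.sqrt (cre z))%:C = z.
Proof.
move=> /ge0_real [ez z0]; split; first exact: conjC_real.
by rewrite mulC_real -expr2 sqr_sqrtr // -ez.
Qed.

Lemma holder_core m n (X Y : 'M[C]_(m,n)) :
  let a i := Num.sqrt (cre (spectral_diag (adj X *m X) 0 i)) in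
  let b j := Num.sqrt (cre (spectral_diag (adj Y *m Y) 0 j)) in
  exists w : 'I_n -> 'I_n -> R,
   [/\ cre (\tr (adj Y *m X)) <= \sum_j \sum_i b j * a i * w j i,
       forall j i, 0 <= w j i,
       forall j, \sum_i w j i <= 1 & forall i, \sum_j w j i <= 1].
Proof.
move=> a b.
have hX := canon_decomp X; have hY := canon_decomp Y.
have uV := spectral_unitarymx (adj X *m X).
have uQ := spectral_unitarymx (adj Y *m Y).
move: hX hY uV uQ (@decomp_ge0 _ _ _ X) (@decomp_ge0 _ _ _ Y).
rewrite /a /b; clear a b.
move: (spectralmx (adj X *m X)) (spectral_diag (adj X *m X)).
move: (spectralmx (adj Y *m Y)) (spectral_diag (adj Y *m Y)).
move=> Q f V e hX hY uV uQ gX gY.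
have e0 := gX _ _ uV hX; have f0 := gY _ _ uQ hY.
pose s := \row_i (Num.sqrt (cre (e 0 i)))%:C.
pose t := \row_i (Num.sqrt (cre (f 0 i)))%:C.
have hs : forall i, conjC (s 0 i) = s 0 i /\ s 0 i * s 0 i = e 0 i.
  by move=> i; rewrite !mxE; apply: sqrt_cplx.
have ht : forall i, conjC (t 0 i) = t 0 i /\ t 0 i * t 0 i = f 0 i.
  by move=> i; rewrite !mxE; apply: sqrt_cplx.
have [H [M [eT rH cH rM cM]]] := gen_holder uV uQ hX hY hs ht.
exists (fun j i => (nrm2 (H j i) + nrm2 (M i j)) / 2); split.
- rewrite eT cre_sum; apply: ler_sum => j _; rewrite cre_sum; apply: ler_sum => i _.
  rewrite !mxE cre_scal; apply: ler_wpM2l; last exact: re_mul_le.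
  by apply: mulr_ge0; apply: sqrtr_ge0.
- by move=> j i; apply: divr_ge0 => //; apply: addr_ge0; apply: nrm2_ge0.
- move=> j; rewrite -mulr_suml big_split /= (sum_nrm2_eq (cM j)).
  have := sum_nrm2_le (rH j); lra.
- move=> i; rewrite -mulr_suml big_split /= (sum_nrm2_eq (rM i)).
  have := sum_nrm2_le (cH i); lra.
Qed.


Lemma holder (p q : R) m n (X Y : 'M[C]_(m,n)) : 1 < p -> p^-1 + q^-1 = 1 ->
  cre (\tr (adj Y *m X)) <= schatten q X * schatten p Y.
Proof.
move=> p1 pq; have [w [h w0 wr wc]] := holder_core X Y.
apply: le_trans h _; rewrite !schatten_canon.
by apply: SH => // i; apply: sqrtr_ge0.
Qed.

Lemma le_bigmax_seq (I : eqType) (r : seq I) (a : I -> R) i : i \in r ->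
  a i <= \big[Num.max/0]_(j <- r) a j.
Proof.
elim: r => // x r IH; rewrite inE big_cons => /orP [/eqP ->|ir].
  by rewrite le_max lexx.
by rewrite le_max IH ?orbT.
Qed.

Lemma le_bigmax_ord n (a : 'I_n -> R) i : a i <= \big[Num.max/0]_(j < n) a j.
Proof. by apply: le_bigmax_seq; rewrite mem_index_enum. Qed.

Lemma SHinf n (a b : 'I_n -> R) (w : 'I_n -> 'I_n -> R) :
  (forall i, 0 <= a i) -> (forall j, 0 <= b j) -> (forall j i, 0 <= w j i) ->
  (forall j, \sum_i w j i <= 1) ->
  \sum_j \sum_i b j * a i * w j i <= (\big[Num.max/0]_(i < n) a i) * \sum_j b j.
Proof.
move=> a0 b0 w0 wr.
set Ma := \big[Num.max/0]_(i < n) a i.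
have aM : forall i, a i <= Ma by move=> i; apply: le_bigmax_ord.
have M0 : 0 <= Ma.
  by rewrite /Ma; elim/big_ind: _ => // x y hx hy; rewrite le_max hx.
clearbody Ma.
rewrite mulr_sumr; apply: ler_sum => j _.
apply: le_trans (_ : \sum_i b j * Ma * w j i <= _).
  apply: ler_sum => i _.
  have h : 0 <= b j * w j i * (Ma - a i) by rewrite !mulr_ge0 // subr_ge0.
  nra.
rewrite -mulr_sumr; have := wr j; have : 0 <= b j * Ma by apply: mulr_ge0.
nra.
Qed.

Lemma holder_inf m n (X Y : 'M[C]_(m,n)) :
  cre (\tr (adj Y *m X)) <= schatten_inf X * schatten 1 Y.
Proof.
have [w [h w0 wr wc]] := holder_core X Y.
apply: le_trans h _; rewrite schatten_canon /schatten_inf invr1.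
rewrite powRr1; last by apply: sumr_ge0 => i _; apply: powR_ge0.
under [X in _ <= _ * X]eq_bigr => i _ do rewrite powRr1 ?sqrtr_ge0 //.
by apply: SHinf => // i; apply: sqrtr_ge0.
Qed.

End Real.




From HB Require Import structures.
From mathcomp Require Import all_boot all_order all_algebra.
From mathcomp Require Import spectral sesquilinear complex reals exp.
From mathcomp Require Import ring lra.
Set Implicit Arguments. Unset Strict Implicit. Unset Printing Implicit Defensive.
Import Order.TTheory GRing.Theory Num.Theory Num.Def.
Local Open Scope ring_scope.
Local Open Scope complex_scope.
Local Open Scope sesquilinear_scope.

Section Pw.
Variable R : realType.

Lemma pw1 (s p' : R) : 0 <= s -> 0 < p' -> powR s (p' - 2) * s ^+ 2 = powR s p'.
Proof.
move=> s0 p0.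
have [->|sn0] := eqVneq s 0.
  by rewrite expr0n /= mulr0 powR0 // gt_eqF.
rewrite -powR_mulrn // -powRD; first by rewrite subrK.
by rewrite sn0 implybT.
Qed.

Lemma pw2 (s p p' : R) : 0 <= s -> 1 < p' -> 0 < p -> (p' - 1) * p = p' ->
  powR (Num.sqrt (powR s (p' - 2) * s ^+ 2 * powR s (p' - 2))) p = powR s p'.
Proof.
move=> s0 p1 p0 hp.
have e1 : powR s (p' - 2) * s ^+ 2 * powR s (p' - 2) = (powR s (p' - 2) * s) ^+ 2.
  by rewrite exprMn; ring.
have e2 : powR s (p' - 2) * s = powR s (p' - 1).
  have [->|sn0] := eqVneq s 0.
    by rewrite mulr0 powR0 // subr_eq0 gt_eqF.
  rewrite -{2}(powRr1 s0) -powRD; first by congr powR; ring.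
  by rewrite sn0 implybT.
rewrite e1 sqrtr_sqr ger0_norm; last by rewrite mulr_ge0 // powR_ge0.
by rewrite e2 -powRrM hp.
Qed.

Lemma pw_final (sig K p p' : R) : 0 <= sig -> 0 < p -> 0 < p' -> p^-1 + p'^-1 = 1 ->
  0 <= K -> sig <= K * powR sig p^-1 -> powR sig p'^-1 <= K.
Proof.
move=> s0 p0 p'0 pq K0 h.
have [s00|sn0] := eqVneq sig 0.
  by rewrite s00 powR0 // invr_neq0 // gt_eqF.
have sg : 0 < sig by rewrite lt_def sn0 s0.
have hs : sig = powR sig p^-1 * powR sig p'^-1.
  by rewrite -powRD ?pq ?powRr1 // sn0 implybT.
have P0 : 0 < powR sig p^-1 by apply: powR_gt0.
move: h; rewrite {1}hs => h.
set Y := powR sig p'^-1 in h *; set P := powR sig p^-1 in h P0 *.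
clearbody Y P.
nra.
Qed.

End Pw.

Section Main.
Variable R : realType.
Local Notation C := (R[i]).
Local Notation adj X := (X ^t conjC).

Lemma compress_tr (f g : forall m n, 'M[C]_(m, n) -> R) (N m1 m2 : nat) (q : 'I_N -> nat)
  (A SA : forall k, 'M[C]_(m1, q k)) (B SB : forall k, 'M[C]_(m2, q k)) :
  cre (\tr (adj (compress_with g SA SB) *m compress_with f A B)) =
  \sum_k (f _ _ (A k) * g _ _ (SA k) + f _ _ (B k) * g _ _ (SB k)).
Proof.
rewrite /mxtrace cre_sum; apply: eq_bigr => k _.
rewrite mxE !big_ord_recl big_ord0 addr0 !creD.
rewrite !mxE /=.
rewrite oppr0 mul0r subr0 subr0.
by rewrite mulrC [X in _ + X = _]mulrC.
Qed.


Lemma chain (nx ny : forall m n, 'M[C]_(m,n) -> R)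
  (Hh : forall m n (X Y : 'M[C]_(m,n)), cre (\tr (adj Y *m X)) <= nx _ _ X * ny _ _ Y)
  (nx0 : forall m n (X : 'M[C]_(m,n)), 0 <= nx _ _ X)
  (N m1 m2 : nat) (q : 'I_N -> nat)
  (hyp : forall (SA : forall k, 'M[C]_(m1, q k)) (SB : forall k, 'M[C]_(m2, q k)),
      ny _ _ (compress_with ny SA SB) <= ny _ _ (blockT SA SB))
  (A : forall k, 'M[C]_(m1, q k)) (B : forall k, 'M[C]_(m2, q k))
  (Mx : 'M[C]_(\sum_k q k)) :
  cre (\tr (adj (blockT A B *m Mx) *m blockT A B))
    <= nx _ _ (compress_with nx A B) * ny _ _ (blockT A B *m Mx).
Proof.
pose SA k := submxrow (mxrow A *m Mx) k.
pose SB k := submxrow (mxrow B *m Mx) k.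
have eS : blockT A B *m Mx = blockT SA SB by rewrite /blockT mul_col_mx !submxrowK.
rewrite eS.
apply: le_trans (_ : cre (\tr (adj (compress_with ny SA SB) *m compress_with nx A B)) <= _).
  rewrite compress_tr {1}/blockT tr_colrow cre_sum; apply: ler_sum => k _.
  by rewrite creD; apply: lerD; apply: Hh.
apply: le_trans (Hh _ _ _ _) _.
by apply: ler_wpM2l => //; apply: hyp.
Qed.


Lemma schatten_inf_ge0 m n (X : 'M[C]_(m,n)) : 0 <= schatten_inf X.
Proof.
rewrite /schatten_inf; elim/big_ind: _ => //; last by move=> i _; apply: sqrtr_ge0.
by move=> x y hx hy; rewrite le_max hx.
Qed.

Lemma attainR m n (X : 'M[C]_(m,n)) (ga : 'I_n -> R) :
  let V := spectralmx (adj X *m X) in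
  let d i := cre (spectral_diag (adj X *m X) 0 i) in
  let Mx := adj V *m diag_mx (\row_i (ga i)%:C) *m V in
  [/\ forall i, 0 <= d i,
      cre (\tr (adj (X *m Mx) *m X)) = \sum_i ga i * d i &
      forall r, schatten r (X *m Mx) = powR (\sum_i powR (Num.sqrt (ga i * d i * ga i)) r) r^-1].
Proof.
move=> V d Mx.
have hX := canon_decomp X.
have uV := spectral_unitarymx (adj X *m X).
have e0 := decomp_ge0 uV hX.
have ed : forall i, spectral_diag (adj X *m X) 0 i = (d i)%:C /\ 0 <= d i.
  by move=> i; apply: ge0_real.
have hg : forall i, conjC ((\row_i (ga i)%:C : 'rV[C]_n) 0 i) = (\row_i (ga i)%:C : 'rV[C]_n) 0 i.
  by move=> i; rewrite mxE conjC_real.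
have [hS htr] := attain uV hX hg.
split.
- by move=> i; case: (ed i).
- rewrite /Mx htr cre_sum; apply: eq_bigr => i _.
  by rewrite mxE (ed i).1 mulC_real.
- move=> r; rewrite /Mx (schatten_W r uV hS).
  by congr powR; apply: eq_bigr => i _; rewrite !mxE (ed i).1 !mulC_real.
Qed.

End Main.




Theorem mainTheorem1 (R : realType) (p : R) (N : nat) :
  1 <= p -> p <= 2 -> (1 <= N)%N ->
  (forall (m1 m2 : nat) (n : 'I_N -> nat)
          (S : forall k : 'I_N, 'M[R[i]]_(m1, n k))
          (Rb : forall k : 'I_N, 'M[R[i]]_(m2, n k)),
      schatten p (compress p S Rb) <= schatten p (blockT S Rb)) ->
  (forall p' : R, 1 < p -> p^-1 + p'^-1 = 1 ->
   forall (m1 m2 : nat) (n : 'I_N -> nat)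
          (A : forall k : 'I_N, 'M[R[i]]_(m1, n k))
          (B : forall k : 'I_N, 'M[R[i]]_(m2, n k)),
     schatten p' (blockT A B) <= schatten p' (compress p' A B))
  /\
  (p = 1 ->
   forall (m1 m2 : nat) (n : 'I_N -> nat)
          (A : forall k : 'I_N, 'M[R[i]]_(m1, n k))
          (B : forall k : 'I_N, 'M[R[i]]_(m2, n k)),
     schatten_inf (blockT A B) <= schatten_inf (compress_inf A B)).
Proof.
move=> p1 p2 N1 hyp; split.
- move=> p' p1' pq m1 m2 n A B.
  have p0 : 0 < p by lra.
  have pi1 : p^-1 < 1 by rewrite invf_lt1.
  have ep : p'^-1 = 1 - p^-1 by rewrite -pq addrC addKr.
  have pi0 : 0 < p^-1 by rewrite invr_gt0.
  have ip' : 0 < p'^-1 by rewrite ep subr_gt0.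
  have p'0 : 0 < p' by rewrite -invr_gt0.
  have ip'1 : p'^-1 < 1 by rewrite ep ltrBlDr ltrDl.
  have p'1 : 1 < p' by rewrite -invf_lt1.
  have hp : (p' - 1) * p = p'.
    have h : p * p' = (p^-1 + p'^-1) * (p * p') by rewrite pq mul1r.
    have pn : p != 0 by rewrite gt_eqF.
    have pn' : p' != 0 by rewrite gt_eqF.
    have h2 : (p^-1 + p'^-1) * (p * p') = p' + p.
      by field; rewrite pn pn'.
    rewrite pq mul1r in h2; lra.
  set T := blockT A B.
  pose d i := cre (spectral_diag ((T ^t conjC) *m T) 0 i).
  pose s i := Num.sqrt (d i).
  pose ga i := powR (s i) (p' - 2).
  have [d0 htr hsch] := attainR T ga.
  have hc := @chain R (fun m n X => schatten p' X) (fun m n X => schatten p X)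
    (fun m n X Y => holder X Y p1' pq) (fun m n X => powR_ge0 _ _) N m1 m2 n
    (fun SA SB => hyp m1 m2 n SA SB) A B
    ((spectralmx ((T ^t conjC) *m T)) ^t conjC *m diag_mx (\row_i (ga i)%:C) *m spectralmx ((T ^t conjC) *m T)).
  rewrite -/T htr hsch in hc.
  have sd : forall i, s i ^+ 2 = d i by move=> i; rewrite sqr_sqrtr //; apply: d0.
  have E1 : \sum_i ga i * d i = \sum_i powR (s i) p'.
    by apply: eq_bigr => i _; rewrite -sd pw1 // sqrtr_ge0.
  have E2 : \sum_i powR (Num.sqrt (ga i * d i * ga i)) p = \sum_i powR (s i) p'.
    by apply: eq_bigr => i _; rewrite -sd pw2 // sqrtr_ge0.
  rewrite E1 E2 in hc.
  rewrite (schatten_canon p' T).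
  apply: pw_final hc => //; first by apply: sumr_ge0 => i _; apply: powR_ge0.
  exact: powR_ge0.
- move=> ep1 m1 m2 n A B; subst p.
  set T := blockT A B.
  set K := schatten_inf (compress_inf A B).
  have K0 : 0 <= K by apply: schatten_inf_ge0.
  pose d i := cre (spectral_diag (T ^t conjC *m T) 0 i).
  pose s i := Num.sqrt (d i).
  have -> : schatten_inf T = \big[Num.max/0]_(j < _) s j by [].
  elim/big_ind: _ => //; first by move=> x y hx hy; rewrite ge_max hx hy.
  move=> j _.
  pose ga i : R := (i == j)%:R.
  have [d0 htr hsch] := attainR T ga.
  have hc := @chain R (fun m n X => schatten_inf X) (fun m n X => schatten 1 X)
    (fun m n X Y => holder_inf X Y) (fun m n X => schatten_inf_ge0 X) N m1 m2 n
    (fun SA SB => hyp m1 m2 n SA SB) A B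
    ((spectralmx (T ^t conjC *m T)) ^t conjC *m diag_mx (\row_i (ga i)%:C) *m spectralmx (T ^t conjC *m T)).
  rewrite -/T htr hsch in hc.
  have E1 : \sum_i ga i * d i = d j.
    rewrite (bigD1 j) //= big1 ?addr0 /ga ?eqxx ?mul1r // => i /negbTE ->.
    by rewrite mul0r.
  have E2 : \sum_i powR (Num.sqrt (ga i * d i * ga i)) 1 = s j.
    rewrite (bigD1 j) //= big1 ?addr0 /ga ?eqxx ?mul1r ?mulr1.
      by rewrite powRr1 // sqrtr_ge0.
    by move=> i /negbTE ->; rewrite mul0r mul0r sqrtr0 powR0 // oner_neq0.
  rewrite E1 E2 invr1 powRr1 ?sqrtr_ge0 // in hc.
  have sd : s j ^+ 2 = d j by rewrite sqr_sqrtr //; apply: d0.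
  have s0 : 0 <= s j by apply: sqrtr_ge0.
  rewrite -sd in hc.
  have [->|sn0] := eqVneq (s j) 0; first exact: K0.
  have sg : 0 < s j by rewrite lt_def sn0 s0.
  move: hc; rewrite -/K; set x := s j; clearbody x; nra.
Qed.
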